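(* Let $X$ be a countably compact space satisfying $\mathsf{IC}$. Then $\mathsf{EC}(X,Y)$ holds for every C-closed isocompact space $Y$ with $G_\delta$ points.
   Context: All spaces are Hausdorff and maps continuous. $X$ satisfies $\mathsf{IC}$ if of any two disjoint closed subsets of $X$ at least one is Lindelöf. A space is C-closed if every countably compact subspace is closed, and isocompact if every closed countably compact subset is compact. For a non-Lindelöf space $X$, $\mathsf{EC}(X,Y)$ means: for every continuous $f:X\to Y$ there is a Lindelöf $Z\subset X$ with $f(X\setminus Z)$ a singleton (for Lindelöf $X$ regarded as trivially true). *)

(* Defs.v *)
From HB Require Import structures.
From mathcomp Require Import all_boot all_order all_algebra.
From mathcomp Require Import all_classical all_reals all_analysis.
Set Implicit Arguments. Unset Strict Implicit. Unset Printing Implicit Defensive.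
Local Open Scope classical_set_scope.

Definition lindelof_set {X : topologicalType} (A : set X) : Prop :=
  forall F : set (set X), F `<=` open -> A `<=` \bigcup_(U in F) U ->
    exists G : set (set X), [/\ G `<=` F, countable G & A `<=` \bigcup_(U in G) U].

Definition countably_compact_set {X : topologicalType} (A : set X) : Prop :=
  forall F : set (set X), countable F -> F `<=` open -> A `<=` \bigcup_(U in F) U ->
    exists G : set (set X), [/\ G `<=` F, finite_set G & A `<=` \bigcup_(U in G) U].

Definition IC (X : topologicalType) : Prop :=
  forall A B : set X, closed A -> closed B -> A `&` B = set0 ->
    lindelof_set A \/ lindelof_set B.

Definition C_closed (Y : topologicalType) : Prop :=
  forall A : set Y, countably_compact_set A -> closed A.

Definition isocompact (Y : topologicalType) : Prop :=
  forall A : set Y, closed A -> countably_compact_set A -> compact A.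

Definition Gdelta_points (Y : topologicalType) : Prop :=
  forall y : Y, exists U : nat -> set Y,
    (forall n, open (U n)) /\ [set y] = \bigcap_n U n.

(* EC(X,Y); trivially true for Lindelof X. *)
Definition EC (X Y : topologicalType) : Prop :=
  lindelof_set [set: X] \/
  forall f : X -> Y, continuous f ->
    exists Z : set X, lindelof_set Z /\ exists y : Y, f @` (~` Z) = [set y].

(* Main.v *)
Require Import Defs.
From HB Require Import structures.
From mathcomp Require Import all_boot all_order all_algebra.
From mathcomp Require Import all_classical all_reals all_analysis.
From mathcomp Require Import finmap.
Local Open Scope classical_set_scope.

Lemma sep_pt_compact (T : topologicalType) (C : set T) (y : T) :
  hausdorff_space T -> compact C -> ~ C y ->
  exists W, nbhs y W /\ closure W `&` C = set0.
Proof.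
move=> hT cC nCy; apply: contrapT => H.
have ne : forall W, nbhs y W -> closure W `&` C !=set0.
  move=> W yW; apply/set0P/negP => /eqP e; apply: H; by exists W.
pose F := filter_from (nbhs y) (fun W => closure W `&` C).
have FF : Filter F.
  apply: filter_from_filter; first by exists setT; exact: filterT.
  move=> i j yi yj; exists (i `&` j); first exact: filterI.
  move=> p [/closureI [pi pj] Cp]; split; split => //.
have PF : ProperFilter F by apply: filter_from_proper.
have FC : F C by exists setT; [exact: filterT| move=> p []].
have [z [Cz clz]] := cC F PF FC.
have : z = y.
  apply/esym/hT => A B yA zB.
  have /clz : F (closure A `&` C) by exists A.
  move=> /(_ _ (nbhs_interior zB)) [p [[clp _] pB]].
  have [q [Aq Bq]] := clp _ pB; by exists q.
by move=> e; apply: nCy; rewrite -e.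
Qed.

Lemma lindelof_bigcup (T : topologicalType) (I : Type) (D : set I) (B : I -> set T) :
  countable D -> (forall i, D i -> lindelof_set (B i)) ->
  lindelof_set (\bigcup_(i in D) B i).
Proof.
move=> cD lB F Fo cov.
have : forall i, exists G : set (set T),
    D i -> [/\ G `<=` F, countable G & B i `<=` \bigcup_(U in G) U].
  move=> i; case: (pselect (D i)) => Di; last by exists set0.
  have [G HG] := lB i Di F Fo (fun x Bx => cov x (ex_intro2 _ _ i Di Bx)).
  by exists G.
move=> /choice [g Hg]; exists (\bigcup_(i in D) g i); split.
- by move=> U [i Di giU]; have [+ _ _] := Hg i Di; apply.
- by apply: bigcup_countable => // i Di; have [_ + _] := Hg i Di.
- move=> x [i Di Bx]; have [_ _ /(_ x Bx) [U gU Ux]] := Hg i Di.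
  by exists U => //; exists i.
Qed.

Lemma cc_image (X Y : topologicalType) (f : X -> Y) : continuous f ->
  countably_compact_set [set: X] -> countably_compact_set (f @` setT).
Proof.
move=> cf ccX F cF Fo cov.
pose F' := (fun U => f @^-1` U) @` F.
have cF' : countable F' by apply: sub_countable cF; exact: card_image_le.
have F'o : F' `<=` open by move=> _ [U FU <-]; apply: (proj1 (continuousP f) cf); exact: Fo.
have covX : [set: X] `<=` \bigcup_(V in F') V.
  move=> x _; have [U FU Ufx] := cov (f x) (ex_intro2 _ _ x I erefl).
  by exists (f @^-1` U) => //; exists U.
have [G' [G'F' fG' covG']] := ccX F' cF' F'o covX.
have : forall V, exists U, F' V -> F U /\ f @^-1` U = V.
  move=> V; case: (pselect (F' V)) => FV; last by exists set0.
  by case: FV => U FU eU; exists U.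
move=> /choice [g Hg]; exists (g @` G'); split.
- by move=> _ [V G'V <-]; have [] := Hg V (G'F' V G'V).
- exact: finite_image.
- move=> _ [x _ <-]; have [V G'V Vx] := covG' x I.
  exists (g V); first by exists V.
  have [_ e] := Hg V (G'F' V G'V); by rewrite -e in Vx.
Qed.

Section PT.
Variables (T : topologicalType) (x0 : T).
Definition PT : Type := T.
HB.instance Definition _ := Topological.on PT.
HB.instance Definition _ := isPointed.Build PT x0.
Lemma compact_cover_np (A : set T) : compact A -> cover_compact A.
Proof. move=> cA; have e := (@compact_cover PT); have : @cover_compact PT A by rewrite -e. exact. Qed.
End PT.

Theorem corollary3p10 (X : topologicalType) :
  hausdorff_space X -> countably_compact_set [set: X] -> IC X ->
  forall Y : topologicalType, hausdorff_space Y ->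
    C_closed Y -> isocompact Y -> Gdelta_points Y -> EC X Y.
Proof.
move=> hX ccX icX Y hY Ccl iso gd.
case: (pselect (lindelof_set [set: X])) => LX; [by left|right].
move=> f cf.
set K := f @` setT.
have cK : compact K := iso K (Ccl K (@cc_image _ _ f cf ccX)) (@cc_image _ _ f cf ccX).
have cpre : forall A, closed A -> closed (f @^-1` A) := proj1 (continuous_closedP f) cf.
have [y [Ky Py]] : exists y, K y /\
    forall W, nbhs y W -> ~ lindelof_set (f @^-1` closure W).
  apply: contrapT => H.
  have : forall y, exists W, K y -> nbhs y W /\ lindelof_set (f @^-1` closure W).
    move=> y; case: (pselect (K y)) => Ky; last by exists setT.
    apply: contrapT => H2; apply: H; exists y; split => // W yW LW.
    by apply: H2; exists W.
  move=> /choice [Wf HW].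
  have [x0 _] : exists x : X, True.
    apply: contrapT => nx; apply: LX => F _ _; exists set0; split => //; try exact: countable0.
    by move=> x; exfalso; apply: nx; exists x.
  have y0 : Y := f x0.
  have cK2 : cover_compact K := @compact_cover_np Y y0 K cK.
  have [D' sD cov'] := cK2 Y K (fun y => interior (Wf y))
    (fun i _ => @open_interior _ _)
    (fun z Kz => ex_intro2 _ _ z Kz (proj1 (HW z Kz))).
  apply: LX.
  have -> : [set: X] = \bigcup_(i in [set` D']) (f @^-1` closure (Wf i)).
    apply/seteqP; split => x // _.
    have [i D'i Wx] := cov' (f x) (ex_intro2 _ _ x I erefl).
    exists i => //; apply: subset_closure; exact: interior_subset.
  apply: lindelof_bigcup; first exact/finite_set_countable/finite_fset.
  move=> i D'i; have := sD i D'i; rewrite in_setE => Ki.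
  by have [] := HW i Ki.
have [U [Uo eU]] := gd y.
have Uy : forall n, U n y.
  by move=> n; have : [set y] y := erefl; rewrite eU => /(_ n I).
have LC : forall n, lindelof_set (f @^-1` ~` U n).
  move=> n.
  have cKn : compact (K `&` ~` U n) := compact_closedI cK (open_closedC (Uo n)).
  have [W [yW e]] := @sep_pt_compact Y _ y hY cKn (fun H => H.2 (Uy n)).
  have := icX _ _ (cpre (closure W) (@closed_closure _ W)) (cpre _ (open_closedC (Uo n))).
  case.
  - apply/seteqP; split => x // [clx Cx].
    have : (closure W `&` (K `&` ~` U n)) (f x).
      by split => //; split => //; exists x.
    by rewrite e.
  - by move=> /(Py W yW).
  - done.
have LZ : lindelof_set ((f @^-1` (~` [set y]))).
  have -> : (f @^-1` (~` [set y])) = \bigcup_(n in setT) (f @^-1` ~` U n).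
    apply/seteqP; split => x /=.
    - move=> nfy; apply: contrapT => H; apply: nfy.
      have : (\bigcap_n U n) (f x).
        by move=> n _; apply: contrapT => Hn; apply: H; exists n.
      by rewrite -eU.
    - by move=> [n _ nU] fxy; apply: nU; rewrite fxy; exact: Uy.
  apply: lindelof_bigcup; first exact: countableP.
  by move=> n _; exact: LC.
exists ((f @^-1` (~` [set y]))); split => //; exists y.
apply/seteqP; split.
- by move=> _ [x nZx <-]; apply: contrapT.
- move=> _ ->; case: Ky => x _ fx; exists x => //=; rewrite fx.
Qed.
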